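(* Let $Q=(G\leftleftarrows A)$ be a group-like graph. Then the bialgebra $(\mathbf k[A]\xrightarrow{\phi}\mathbf k[G])$ in $\mathcal{LM}$ (with $\phi(a)=t(a)-s(a)$, bimodule structure from the two-sided $G$-action on $A$, $\Delta_0(g)=g\otimes g$, $\Delta_1(a)=a\otimes t(a)+s(a)\otimes a$) is a Hopf algebra in $\mathcal{LM}$, with antipode given by $S_0(g)=g^{-1}$ on $\mathbf k[G]$ and $S_1(a)=-s(a)^{-1}\cdot a\cdot t(a)^{-1}$ on $\mathbf k[A]$.
   Context: A group-like graph is a directed graph $(G\overset{s}{\underset{t}{\leftleftarrows}}A)$ with an associative morphism $\mu$ from its Cartesian square (vertices $G\times G$, arrows $A\times G\sqcup G\times A$) to itself, such that the induced semigroup structure on $G$ is a group; $\mu$ gives left and right actions of $G$ on $A$ compatible with $s,t$ (e.g. $s(g\cdot a)=gs(a)$, $t(a\cdot g)=t(a)g$). Over a field $\mathbf k$ of characteristic $0$, the category $\mathcal{LM}$ has objects linear maps $U\to V$ and tensor product $(U\xrightarrow{f}V)\otimes(U'\xrightarrow{f'}V')=(U\otimes V'+V\otimes U'\to V\otimes V')$. A bialgebra in $\mathcal{LM}$ is $(\mathcal A\xrightarrow{f}\mathcal H)$ with $\mathcal H$ a bialgebra (coproduct $\Delta_0$), $\mathcal A$ an $\mathcal H$-bimodule, $f$ a bimodule map, and a bimodule map $\Delta_1:\mathcal A\to\mathcal A\otimes\mathcal H+\mathcal H\otimes\mathcal A$ with $\Delta_0 f=(f\otimes\mathrm{Id}+\mathrm{Id}\otimes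 f)\Delta_1$. It is a Hopf algebra if there are an antipode $S_0$ of $\mathcal H$ and a linear map $S_1:\mathcal A\to\mathcal A$ with $f S_1=S_0 f$ such that $\mu\circ(S_1\otimes\mathrm{Id}_{\mathcal H}+S_0\otimes\mathrm{Id}_{\mathcal A})\circ\Delta_1=\mu\circ(\mathrm{Id}_{\mathcal A}\otimes S_0+\mathrm{Id}_{\mathcal H}\otimes S_1)\circ\Delta_1=0$, where $\mu$ denotes the bimodule actions $\mathcal A\otimes\mathcal H+\mathcal H\otimes\mathcal A\to\mathcal A$. *)

(* Defs.v *)
From HB Require Import structures.
From mathcomp Require Import all_boot all_order all_algebra finmap.
From mathcomp Require Import monalg.

Set Implicit Arguments.
Unset Strict Implicit.
Unset Printing Implicit Defensive.

Import GRing.Theory.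
Local Open Scope ring_scope.

(* Group-like graphs.  G is the group of vertices (the semigroup structure  *)
(* induced by mu on vertices), A the set of arrows, s t source and target,  *)
(* lact g a = mu(g,a) (arrow (g,a) of G x A) and ract a g = mu(a,g).        *)
(* The fields express that mu is a morphism of graphs from the Cartesian    *)
(* square to Q (compatibility with s, t, and with the group law on          *)
(* vertices) and that mu is associative on arrows of the Cartesian cube     *)
(* (types (g,h,a), (g,a,h), (a,g,h)).  The unit axioms make k[A] a unital   *)
(* k[G]-bimodule.                                   *)
Record group_like_graph (G : groupType) (A : choiceType) := GroupLikeGraph {
  src : A -> G;
  tgt : A -> G;
  lact : G -> A -> A;
  ract : A -> G -> A;
  src_lact : forall g a, src (lact g a) = (g * src a)%g;
  tgt_lact : forall g a, tgt (lact g a) = (g * tgt a)%g;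
  src_ract : forall a g, src (ract a g) = (src a * g)%g;
  tgt_ract : forall a g, tgt (ract a g) = (tgt a * g)%g;
  lactA : forall g h a, lact (g * h)%g a = lact g (lact h a);
  lractA : forall g a h, ract (lact g a) h = lact g (ract a h);
  ractA : forall a g h, ract a (g * h)%g = ract (ract a g) h;
  lact1 : forall a, lact 1%g a = a;
  ract1 : forall a, ract a 1%g = a
}.

(* Tensor products of free spaces are identified with free spaces on        *)
(* products: k[X] (x) k[Y] = k[X * Y], and direct sums with free spaces on  *)
(* sums: k[X] + k[Y] = k[X + Y].                                            *)
Section FreeLinear.
Variable k : fieldType.

Definition lin (X : choiceType) (V : lmodType k) (f : X -> V)
    (u : {malg k[X]}) : V :=
  \sum_(x <- msupp u) u@_x *: f x.

Definition tmul (X Y : choiceType) (u : {malg k[X]}) (v : {malg k[Y]})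
    : {malg k[(X * Y)%type]} :=
  \sum_(x <- msupp u) \sum_(y <- msupp v) (u@_x * v@_y) *: << (x, y) >>.

Definition tens (X Y X' Y' : choiceType)
    (F : {malg k[X]} -> {malg k[X']}) (F' : {malg k[Y]} -> {malg k[Y']})
    : {malg k[(X * Y)%type]} -> {malg k[(X' * Y')%type]} :=
  lin (fun p : X * Y => tmul (F << p.1 >>) (F' << p.2 >>)).

Definition inl_lin (X Y : choiceType) : {malg k[X]} -> {malg k[(X + Y)%type]} :=
  lin (fun x : X => << (inl x : X + Y) >>).
Definition inr_lin (X Y : choiceType) : {malg k[Y]} -> {malg k[(X + Y)%type]} :=
  lin (fun y : Y => << (inr y : X + Y) >>).

Definition dsum (X Y X' Y' : choiceType)
    (F : {malg k[X]} -> {malg k[X']}) (F' : {malg k[Y]} -> {malg k[Y']})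
    : {malg k[(X + Y)%type]} -> {malg k[(X' + Y')%type]} :=
  lin (fun z : X + Y => match z with
                        | inl x => inl_lin Y' (F << x >>)
                        | inr y => inr_lin X' (F' << y >>)
                        end).

End FreeLinear.

Section GroupLikeHopf.
Variables (k : fieldType) (G : groupType) (A : choiceType)
          (Q : group_like_graph G A).

Local Notation s := (src Q).
Local Notation t := (tgt Q).

Definition glg_phi : {malg k[A]} -> {malg k[G]} :=
  lin (fun a => << t a >> - << s a >>).

Definition glg_mulH : {malg k[(G * G)%type]} -> {malg k[G]} :=
  lin (fun p : G * G => << (p.1 * p.2)%g >>).

Definition glg_unitH : {malg k[G]} := << 1%g >>.

Definition glg_eps (u : {malg k[G]}) : k :=
  (lin (fun _ : G => (1 : k^o)) u : k).

Definition glg_Delta0 : {malg k[G]} -> {malg k[(G * G)%type]} :=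
  lin (fun g : G => << (g, g) >>).

Definition glg_Delta1 : {malg k[A]} -> {malg k[((A * G) + (G * A))%type]} :=
  lin (fun a : A => << (inl (a, t a) : (A * G) + (G * A)) >>
                  + << (inr (s a, a) : (A * G) + (G * A)) >>).

Definition glg_mu : {malg k[((A * G) + (G * A))%type]} -> {malg k[A]} :=
  lin (fun z : (A * G) + (G * A) => match z with
                    | inl p => << ract Q p.1 p.2 >>
                    | inr p => << lact Q p.1 p.2 >>
                    end).

Definition glg_S0 : {malg k[G]} -> {malg k[G]} :=
  lin (fun g : G => << (g^-1)%g >>).

Definition glg_S1 : {malg k[A]} -> {malg k[A]} :=
  lin (fun a : A => - << lact Q ((s a)^-1)%g (ract Q a ((t a)^-1)%g) >>).

End GroupLikeHopf.

(* Main.v *)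
Require Import Defs.
From HB Require Import structures.
From mathcomp Require Import all_boot all_order all_algebra finmap.
From mathcomp Require Import monalg.
Set Implicit Arguments. Unset Strict Implicit. Unset Printing Implicit Defensive.
Import GRing.Theory.
Local Open Scope ring_scope.


Section L.
Variable k : fieldType.

Lemma linEw (X : choiceType) (V : lmodType k) (f : X -> V) (u : {malg k[X]}) d :
  (msupp u `<=` d)%fset -> lin f u = \sum_(x <- d) u@_x *: f x.
Proof.
move=> le; rewrite /lin [LHS](big_fset_incl _ le) => //= x xd /mcoeff_outdom ->.
by rewrite scale0r.
Qed.

Lemma linD (X : choiceType) (V : lmodType k) (f : X -> V) u v :
  lin f (u + v) = lin f u + lin f v.
Proof.
have h1 : (msupp u `<=` msupp u `|` msupp v)%fset by apply: fsubsetUl.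
have h2 : (msupp v `<=` msupp u `|` msupp v)%fset by apply: fsubsetUr.
have h3 : (msupp (u + v) `<=` msupp u `|` msupp v)%fset by apply: msuppD_le.
rewrite (linEw _ h1) (linEw _ h2) (linEw _ h3) -big_split /=.
by apply: eq_bigr => x _; rewrite mcoeffD scalerDl.
Qed.

Lemma linZ (X : choiceType) (V : lmodType k) (f : X -> V) c u :
  lin f (c *: u) = c *: lin f u.
Proof.
rewrite (linEw _ (msuppZ_le c u)) /lin scaler_sumr.
by apply: eq_bigr => x _; rewrite mcoeffZ scalerA.
Qed.

Lemma lin0 (X : choiceType) (V : lmodType k) (f : X -> V) : lin f 0 = 0.
Proof. by rewrite /lin msupp0 big_seq_fset0. Qed.

Lemma linN (X : choiceType) (V : lmodType k) (f : X -> V) u : lin f (- u) = - lin f u.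
Proof. by rewrite -(scaleN1r u) linZ scaleN1r. Qed.

Lemma linU (X : choiceType) (V : lmodType k) (f : X -> V) c x :
  lin f << c *g x >> = c *: f x.
Proof. by rewrite (linEw _ msuppU_le) big_seq_fset1 mcoeffUU. Qed.

Lemma linU1 (X : choiceType) (V : lmodType k) (f : X -> V) x :
  lin f << x >> = f x.
Proof. by rewrite linU scale1r. Qed.

Lemma malgU_scale (X : choiceType) (c : k) (x : X) : << c *g x >> = c *: << x >>.
Proof. by apply/malgP => y; rewrite mcoeffZ !mcoeffU mulr_natr. Qed.

Lemma msupp1 (X : choiceType) (x : X) : msupp (<< x >> : {malg k[X]}) = [fset x]%fset.
Proof. by rewrite msuppU oner_eq0. Qed.

Lemma tmulUU (X Y : choiceType) (x : X) (y : Y) :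
  tmul << x >> << y >> = << (x, y) >> :> {malg k[(X * Y)%type]}.
Proof.
rewrite /tmul msupp1 big_seq_fset1 msupp1 big_seq_fset1.
by rewrite !mcoeffUU mulr1 scale1r.
Qed.

Lemma tmulNl (X Y : choiceType) (x : X) (y : Y) :
  tmul (- << x >>) << y >> = - << (x, y) >> :> {malg k[(X * Y)%type]}.
Proof.
rewrite /tmul msuppN msupp1 big_seq_fset1 msupp1 big_seq_fset1.
by rewrite mcoeffN !mcoeffUU mulr1 scaleN1r.
Qed.

Lemma tmulNr (X Y : choiceType) (x : X) (y : Y) :
  tmul << x >> (- << y >>) = - << (x, y) >> :> {malg k[(X * Y)%type]}.
Proof.
rewrite /tmul msuppN msupp1 big_seq_fset1 msupp1 big_seq_fset1.
by rewrite mcoeffN !mcoeffUU mul1r scaleN1r.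
Qed.

Lemma regA (c : k) : (c%:A : k^o) = c.
Proof. exact: mulr1. Qed.

Lemma addr_eq (V : zmodType) (a b c d : V) : b = d -> a = c -> a + b = c + d.
Proof. by move=> -> ->. Qed.

Lemma malg_ind (X : choiceType) (P : {malg k[X]} -> Prop) :
  P 0 -> (forall c x u, P u -> P (c *: << x >> + u)) -> forall u, P u.
Proof.
move=> P0 PS u; rewrite [u]monalgE.
elim: (msupp u : seq _) => [|x s IH]; first by rewrite big_nil.
by rewrite big_cons malgU_scale; apply: PS.
Qed.
End L.

Section M.
Variables (k : fieldType) (G : groupType) (A : choiceType) (Q : group_like_graph G A).

Lemma p1 (x : {malg k[G]}) :
      glg_mulH (tens (@glg_S0 k G) id (@glg_Delta0 k G x))
      = glg_eps x *: glg_unitH k G.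
Proof.
elim/malg_ind: x => [|c g u IH].
  by rewrite /glg_mulH /tens /glg_Delta0 /glg_eps !lin0 scale0r.
rewrite /glg_mulH /tens /glg_Delta0 /glg_eps /glg_S0 in IH *.
rewrite !linD !linZ scalerDl; apply: (f_equal2 +%R _ IH).
rewrite !linU1 /= tmulUU linU1 /= mulVg.
by rewrite regA.

Qed.

Lemma p2 (x : {malg k[G]}) :
      glg_mulH (tens id (@glg_S0 k G) (@glg_Delta0 k G x))
      = glg_eps x *: glg_unitH k G.
Proof.
elim/malg_ind: x => [|c g u IH].
  by rewrite /glg_mulH /tens /glg_Delta0 /glg_eps !lin0 scale0r.
rewrite /glg_mulH /tens /glg_Delta0 /glg_eps /glg_S0 in IH *.
rewrite !linD !linZ scalerDl; apply: (f_equal2 +%R _ IH).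
rewrite !linU1 /= tmulUU linU1 /= mulgV.
by rewrite regA.
Qed.

Lemma p3 (v : {malg k[A]}) :
      glg_phi Q (@glg_S1 k G A Q v) = @glg_S0 k G (glg_phi Q v).
Proof.
elim/malg_ind: v => [|c a u IH].
  by rewrite /glg_phi /glg_S1 /glg_S0 !lin0.
rewrite /glg_phi /glg_S1 /glg_S0 in IH *.
rewrite !linD !linZ; apply: (f_equal2 +%R _ IH).
rewrite !linU1 !linN !linU1 linD linN !linU1.
rewrite src_lact tgt_lact src_ract tgt_ract mulgV mulg1 mulgA mulVg mul1g.
congr (_ *: _); by rewrite opprB.
Qed.

Lemma p4 (v : {malg k[A]}) :
      glg_mu Q (dsum (tens (@glg_S1 k G A Q) id) (tens (@glg_S0 k G) id)
                     (glg_Delta1 Q v)) = 0.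
Proof.
elim/malg_ind: v => [|c a u IH].
  by rewrite /glg_mu /dsum /glg_Delta1 !lin0.
rewrite /glg_mu /dsum /tens /inl_lin /inr_lin /glg_Delta1 /glg_S1 /glg_S0 in IH *.
rewrite !linD !linZ -[RHS]addr0; apply: (f_equal2 +%R _ IH).
repeat (rewrite !(linD, linZ, linN, linU1, tmulUU, tmulNl, tmulNr) /=).

by rewrite lractA -ractA mulVg ract1 addNr scaler0.
Qed.

Lemma p5 (v : {malg k[A]}) :
      glg_mu Q (dsum (tens id (@glg_S0 k G)) (tens id (@glg_S1 k G A Q))
                     (glg_Delta1 Q v)) = 0.
Proof.
elim/malg_ind: v => [|c a u IH].
  by rewrite /glg_mu /dsum /glg_Delta1 !lin0.
rewrite /glg_mu /dsum /tens /inl_lin /inr_lin /glg_Delta1 /glg_S1 /glg_S0 in IH *.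
rewrite !linD !linZ -[RHS]addr0; apply: (f_equal2 +%R _ IH).
repeat (rewrite !(linD, linZ, linN, linU1, tmulUU, tmulNl, tmulNr) /=).
by rewrite -lactA mulgV lact1 subrr scaler0.
Qed.
End M.

Theorem mainTheorem8 (k : fieldType) (Hk : [pchar k] =i pred0)
    (G : groupType) (A : choiceType) (Q : group_like_graph G A) :
  (forall x : {malg k[G]},
      glg_mulH (tens (@glg_S0 k G) id (@glg_Delta0 k G x))
      = glg_eps x *: glg_unitH k G) /\
  (forall x : {malg k[G]},
      glg_mulH (tens id (@glg_S0 k G) (@glg_Delta0 k G x))
      = glg_eps x *: glg_unitH k G) /\
  (forall v : {malg k[A]},
      glg_phi Q (@glg_S1 k G A Q v) = @glg_S0 k G (glg_phi Q v)) /\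
  (forall v : {malg k[A]},
      glg_mu Q (dsum (tens (@glg_S1 k G A Q) id) (tens (@glg_S0 k G) id)
                     (glg_Delta1 Q v)) = 0) /\
  (forall v : {malg k[A]},
      glg_mu Q (dsum (tens id (@glg_S0 k G)) (tens id (@glg_S1 k G A Q))
                     (glg_Delta1 Q v)) = 0).
Proof.
split; first exact: p1.
split; first exact: p2.
split; first exact: p3.
split; first exact: p4.
exact: p5.
Qed.
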